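(* Let $\mathcal{J}=(a,b)$ be a finite interval, $m\geq 3$, $Q\in L_1(\mathcal{J};\mathbb{C})$, and let $\widetilde Q=Q+c$ for a constant $c\in\mathbb{C}$. Let $L_{\max}(Q),L_{\min}(Q)$ and $L_{\max}(\widetilde Q),L_{\min}(\widetilde Q)$ be the maximal and minimal quasi-differential operators in $L_2(\mathcal{J};\mathbb{C})$ constructed from $Q$ and from $\widetilde Q$ respectively. Then $L_{\max}(\widetilde Q)=L_{\max}(Q)$ and $L_{\min}(\widetilde Q)=L_{\min}(Q)$ (equal domains and equal actions).
   Context: For $P\in L_1(\mathcal{J};\mathbb{C})$ define quasi-derivatives $D^{[k]}_Py=y^{(k)}$ for $k=0,\dots,m-2$; $D^{[m-1]}_Py=y^{(m-1)}+i^{-m}Py$; $D^{[m]}_Py=(D^{[m-1]}_Py)'-i^{-m}P\,D^{[1]}_Py$. The maximal operator $L_{\max}(P)$ acts by $y\mapsto i^mD^{[m]}_Py$ on the domain $\{y: D^{[k]}_Py\in AC([a,b];\mathbb{C}),\ k=0,\dots,m-1,\ D^{[m]}_Py\in L_2(\mathcal{J};\mathbb{C})\}$. The minimal operator $L_{\min}(P)$ is the restriction of $L_{\max}(P)$ to $\{y\in\operatorname{Dom}L_{\max}(P): D^{[k]}_Py(a)=D^{[k]}_Py(b)=0,\ k=0,\dots,m-1\}$. These regularize the formal expression $i^my^{(m)}+qy$ with $q=P'$ in the distributional sense. *)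

(* Defs.v *)
From HB Require Import structures.
From mathcomp Require Import all_boot all_order all_algebra.
From mathcomp Require Import all_classical all_reals all_analysis.
From mathcomp Require Import complex.

Set Implicit Arguments.
Unset Strict Implicit.
Unset Printing Implicit Defensive.
Import Order.TTheory GRing.Theory Num.Theory.
Import numFieldNormedType.Exports.

Local Open Scope classical_set_scope.
Local Open Scope ring_scope.

Section QuasiDiff.
Context {R : realType}.
Local Notation C := (complex R).
Local Notation mu := (@lebesgue_measure R).

Definition iC : C := Complex 0 1.

Definition L1C (a b : R) (f : R -> C) : Prop :=
  mu.-integrable `]a, b[ (EFin \o (fun x => complex.Re (f x))) /\
  mu.-integrable `]a, b[ (EFin \o (fun x => complex.Im (f x))).

Definition L2C (a b : R) (f : R -> C) : Prop :=
  measurable_fun `]a, b[ (fun x => complex.Re (f x)) /\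
  measurable_fun `]a, b[ (fun x => complex.Im (f x)) /\
  mu.-integrable `]a, b[ (EFin \o (fun x => ComplexField.Normc.normc (f x) ^+ 2)).

Definition ACC (a b : R) (f : R -> C) : Prop :=
  forall e : R, 0 < e -> exists2 d : R, 0 < d &
    forall (n : nat) (s t : nat -> R),
      (forall k, (k < n)%N -> a <= s k /\ s k <= t k /\ t k <= b) ->
      (forall k l, (k < n)%N -> (l < n)%N -> k <> l ->
          t k <= s l \/ t l <= s k) ->
      \sum_(k < n) (t k - s k) < d ->
      \sum_(k < n) ComplexField.Normc.normc (f (t k) - f (s k)) < e.

Definition deriv_ae (a b : R) (f g : R -> C) : Prop :=
  {ae mu, forall x, x \in `]a, b[ ->
     is_derive x 1 (fun t => complex.Re (f t)) (complex.Re (g x)) /\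
     is_derive x 1 (fun t => complex.Im (f t)) (complex.Im (g x))}.

Definition eq_ae (a b : R) (f g : R -> C) : Prop :=
  {ae mu, forall x, x \in `]a, b[ -> f x = g x}.

(* [d k] are (representatives of) the quasi-derivatives D^{[k]}_P y,
   k = 0..m, with D^{[k]}_P y absolutely continuous for k = 0..m-1
   and D^{[m]}_P y in L_2.  (m >= 3 is assumed where used, so that
   D^{[1]}_P y = y'.) *)
Definition quasi_derivs (m : nat) (a b : R) (P : R -> C) (d : nat -> R -> C)
  : Prop :=
  (forall k, (k <= m.-1)%N -> ACC a b (d k)) /\
  (forall k, (k.+1 <= m.-2)%N -> deriv_ae a b (d k) (d k.+1)) /\
  (exists g, deriv_ae a b (d m.-2) g /\
     eq_ae a b (d m.-1) (fun x => g x + iC ^- m * P x * d 0%N x)) /\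
  (exists h, deriv_ae a b (d m.-1) h /\
     eq_ae a b (d m) (fun x => h x - iC ^- m * P x * d 1%N x)) /\
  L2C a b (d m).

(* graph of L_max(P): the (class of) y is in the domain and
   L_max(P) y = f  (as elements of L_2, i.e. up to a.e. equality) *)
Definition Lmax_graph (m : nat) (a b : R) (P : R -> C) (y f : R -> C) : Prop :=
  exists d, quasi_derivs m a b P d /\ eq_ae a b y (d 0%N) /\
    eq_ae a b f (fun x => iC ^+ m * d m x).

Definition Lmin_graph (m : nat) (a b : R) (P : R -> C) (y f : R -> C) : Prop :=
  exists d, quasi_derivs m a b P d /\ eq_ae a b y (d 0%N) /\
    eq_ae a b f (fun x => iC ^+ m * d m x) /\
    (forall k, (k < m)%N -> d k a = 0 /\ d k b = 0).

Definition Lmax_dom m a b P (y : R -> C) : Prop := exists f, Lmax_graph m a b P y f.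
Definition Lmin_dom m a b P (y : R -> C) : Prop := exists f, Lmin_graph m a b P y f.

End QuasiDiff.

(* Main.v *)
Require Import Defs.
From HB Require Import structures.
From mathcomp Require Import all_boot all_order all_algebra.
From mathcomp Require Import all_classical all_reals all_analysis.
From mathcomp Require Import complex.
From mathcomp Require Import ring lra zify.
Import Order.TTheory GRing.Theory Num.Theory.
Local Open Scope ring_scope.

Section Aux.
Variable R : realType.
Local Notation C := (complex R).
Local Notation normc := (@ComplexField.Normc.normc R).

Lemma normc_ge0 (x : C) : 0 <= normc x.
Proof. by case: x => u v; exact: sqrtr_ge0. Qed.

Lemma ACC_addZ (a b : R) (f g : R -> C) (k : C) :
  ACC a b f -> ACC a b g -> ACC a b (fun x => f x + k * g x).
Proof.
move=> Hf Hg e e0.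
pose K := normc k + 1.
have K0 : 0 < K by rewrite /K; have := normc_ge0 k; lra.
have [d1 d10 H1] := Hf (e / 2) ltac:(lra).
have e2K : 0 < e / (2 * K) by apply: divr_gt0 => //; lra.
have [d2 d20 H2] := Hg (e / (2 * K)) e2K.
exists (Num.min d1 d2); first by rewrite lt_min d10 d20.
move=> n s t Hst Hdis Hsum.
have m1 : Num.min d1 d2 <= d1 by rewrite ge_min lexx.
have m2 : Num.min d1 d2 <= d2 by rewrite ge_min lexx orbT.
have S1 := H1 n s t Hst Hdis (lt_le_trans Hsum m1).
have S2 := H2 n s t Hst Hdis (lt_le_trans Hsum m2).
set s1 := \sum_(i < n) _ in S1.
set s2 := \sum_(i < n) _ in S2.
have s2ge : 0 <= s2 by apply: sumr_ge0 => i _; exact: normc_ge0.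
have le1 : \sum_(i < n) normc (f (t i) + k * g (t i) - (f (s i) + k * g (s i)))
   <= s1 + normc k * s2.
  rewrite /s1 /s2 mulr_sumr -big_split /=.
  apply: ler_sum => i _.
  have -> : f (t i) + k * g (t i) - (f (s i) + k * g (s i))
     = (f (t i) - f (s i)) + k * (g (t i) - g (s i)) by ring.
  apply: le_trans (le_normcD _ _) _.
  by rewrite ComplexField.Normc.normcM.
have EK : K * (e / (2 * K)) = e / 2 by field; lra.
have nk := normc_ge0 k.
set X := e / (2 * K) in S2 EK.
have : normc k * s2 < e / 2.
  rewrite -EK /K in S2 *; nra.
lra.
Qed.

Lemma deriv_addZ (a b : R) (f f' g g' : R -> C) (k : C) :
  deriv_ae a b f f' -> deriv_ae a b g g' ->
  deriv_ae a b (fun x => f x + k * g x) (fun x => f' x + k * g' x).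
Proof.
move=> Hf Hg; case Ek: k => [kr ki]; rewrite -Ek; move: Hf Hg; apply: (filterS2 (ae_filter_ringOfSetsType (@lebesgue_measure R))) => x Hf Hg xI.
have [Hrf Hif] := Hf xI; have [Hrg Hig] := Hg xI.
have ER : (fun t => complex.Re (f t + k * g t)) =
  (fun t => complex.Re (f t) + complex.Re k * complex.Re (g t)
             - complex.Im k * complex.Im (g t)).
  by apply: funext => t; case: (f t) => ? ?; case: (g t) => ? ?; rewrite Ek /=; ring.
have EI : (fun t => complex.Im (f t + k * g t)) =
  (fun t => complex.Im (f t) + (complex.Re k * complex.Im (g t)
             + complex.Im k * complex.Re (g t))).
  by apply: funext => t; case: (f t) => ? ?; case: (g t) => ? ?; rewrite Ek /=; ring.
have VR : complex.Re (f' x + k * g' x) = complex.Re (f' x) + complex.Re k * complex.Re (g' x)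
             - complex.Im k * complex.Im (g' x).
  by case: (f' x) => ? ?; case: (g' x) => ? ?; rewrite Ek /=; ring.
have VI : complex.Im (f' x + k * g' x) = complex.Im (f' x) + (complex.Re k * complex.Im (g' x)
             + complex.Im k * complex.Re (g' x)).
  by case: (f' x) => ? ?; case: (g' x) => ? ?; rewrite Ek /=; ring.
rewrite ER EI VR VI; split.
  exact: (is_deriveB (is_deriveD Hrf (is_deriveZ (complex.Re k) Hrg)) (is_deriveZ (complex.Im k) Hig)).
exact: (is_deriveD Hif (is_deriveD (is_deriveZ (complex.Re k) Hig) (is_deriveZ (complex.Im k) Hrg))).
Qed.

Definition shiftd (m : nat) (kk : C) (d : nat -> R -> C) : nat -> R -> C :=
  fun k => if k == m.-1 then (fun x => d m.-1 x + kk * d 0%N x) else d k.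

Lemma shiftd_ne m kk d k : k != m.-1 -> shiftd m kk d k = d k.
Proof. by rewrite /shiftd => /negbTE ->. Qed.

Lemma shiftd_eq m kk d : shiftd m kk d m.-1 = (fun x => d m.-1 x + kk * d 0%N x).
Proof. by rewrite /shiftd eqxx. Qed.

Lemma qd_shift (m : nat) (a b : R) (P : R -> C) (c : C) d :
  (3 <= m)%N -> quasi_derivs m a b P d ->
  quasi_derivs m a b (fun x => P x + c) (shiftd m (iC ^- m * c) d).
Proof.
move=> m3 [Hac [Hder [[g [Hg Eg]] [[h [Hh Eh]] HL]]]].
have n0 : (0 != m.-1)%N by apply/eqP; lia.
have n1 : (1 != m.-1)%N by apply/eqP; lia.
have nm : (m != m.-1)%N by apply/eqP; lia.
have n2 : (m.-2 != m.-1)%N by apply/eqP; lia.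
have FF := ae_filter_ringOfSetsType (@lebesgue_measure R).
split.
  move=> k km; have [/eqP ->|kn] := boolP (k == m.-1).
    rewrite shiftd_eq; apply: ACC_addZ; apply: Hac => //; lia.
  by rewrite shiftd_ne //; apply: Hac.
split.
  move=> k km; rewrite !shiftd_ne; first exact: Hder.
    by apply/eqP; lia.
  by apply/eqP; lia.
split.
  exists g; split; first by rewrite shiftd_ne.
  rewrite shiftd_eq shiftd_ne //.
  have E2 := Eg; move: E2 Eg; apply: (filterS2 (ae_filter_ringOfSetsType (@lebesgue_measure R))) => x Hx _ xI; rewrite Hx //; ring.
split.
  exists (fun x => h x + iC ^- m * c * d 1%N x); split.
    rewrite shiftd_eq; apply: deriv_addZ => //.
    by apply: Hder; lia.
  rewrite !shiftd_ne //.
  have E2 := Eh; move: E2 Eh; apply: (filterS2 (ae_filter_ringOfSetsType (@lebesgue_measure R))) => x Hx _ xI; rewrite Hx //; ring.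
by rewrite shiftd_ne.
Qed.

Lemma graph_shift (m : nat) (a b : R) (P : R -> C) (c : C) y f :
  (3 <= m)%N ->
  (Lmax_graph m a b P y f -> Lmax_graph m a b (fun x => P x + c) y f) /\
  (Lmin_graph m a b P y f -> Lmin_graph m a b (fun x => P x + c) y f).
Proof.
move=> m3.
have n0 : (0 != m.-1)%N by apply/eqP; lia.
have nm : (m != m.-1)%N by apply/eqP; lia.
split.
  move=> [d [Hq [Hy Hf]]]; exists (shiftd m (iC ^- m * c) d).
  by rewrite (shiftd_ne _ _ _ _ n0) (shiftd_ne _ _ _ _ nm); split => //; exact: qd_shift.
move=> [d [Hq [Hy [Hf Hb]]]]; exists (shiftd m (iC ^- m * c) d).
rewrite (shiftd_ne _ _ _ _ n0) (shiftd_ne _ _ _ _ nm); split; first exact: qd_shift.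
split => //; split => // k km.
have [/eqP ->|kn] := boolP (k == m.-1).
  rewrite shiftd_eq /=.
  have [-> ->] := Hb m.-1 ltac:(lia).
  have [-> ->] := Hb 0%N ltac:(lia).
  by rewrite !mulr0 !addr0.
by rewrite shiftd_ne //; apply: Hb.
Qed.

End Aux.

Theorem lemma2 (R : realType) (a b : R) (m : nat) (Q : R -> complex R)
    (c : complex R) :
  a < b -> (3 <= m)%N -> L1C a b Q ->
  let Qt := fun x => Q x + c in
  ((forall y, Lmax_dom m a b Qt y <-> Lmax_dom m a b Q y) /\
   (forall y f, Lmax_graph m a b Qt y f <-> Lmax_graph m a b Q y f)) /\
  ((forall y, Lmin_dom m a b Qt y <-> Lmin_dom m a b Q y) /\
   (forall y f, Lmin_graph m a b Qt y f <-> Lmin_graph m a b Q y f)).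
Proof.
move=> _ m3 _ Qt.
have EQ : (fun x => Qt x + - c) = Q by apply: funext => x; rewrite /Qt addrK.
have G1 : forall y f, Lmax_graph m a b Qt y f <-> Lmax_graph m a b Q y f.
  move=> y f; split => H.
    by rewrite -EQ; exact: (@graph_shift R m a b Qt (-c) y f m3).1 H.
  exact: (@graph_shift R m a b Q c y f m3).1 H.
have G2 : forall y f, Lmin_graph m a b Qt y f <-> Lmin_graph m a b Q y f.
  move=> y f; split => H.
    by rewrite -EQ; exact: (@graph_shift R m a b Qt (-c) y f m3).2 H.
  exact: (@graph_shift R m a b Q c y f m3).2 H.
split; split => //.
  by move=> y; split => -[f Hf]; exists f; apply/G1.
by move=> y; split => -[f Hf]; exists f; apply/G2.
Qed.
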